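(* Let $\alpha_1,\alpha_2>0$ satisfy $\alpha_1-\alpha_2\ge e^2$. Let $p$ be analytic in $\mathbb{D}$ with $p(0)=1$. If $$1+\alpha_1 zp'(z)+\alpha_2 z^2p''(z)\prec 1+ze^z,$$ then $p(z)\prec e^z$.
   Context: $\mathbb{D}$ is the open unit disk. For $g,h$ analytic in $\mathbb{D}$, $g\prec h$ means there is an analytic $w:\mathbb{D}\to\mathbb{D}$ with $w(0)=0$ and $g=h\circ w$. *)

(* Defs.v *)
From Stdlib Require Import Reals.
From Coquelicot Require Import Coquelicot.
Open Scope R_scope.

Definition in_disk (z : C) : Prop := Cmod z < 1.

(* Analytic (= holomorphic) on the unit disk: complex differentiable at
   every point of the disk (derivative taken over the field C). *)
Definition holo_on_disk (f : C -> C) : Prop :=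
  forall z : C, in_disk z -> @ex_derive C_AbsRing C_NormedModule f z.

Definition cexp (z : C) : C :=
  Cmult (RtoC (exp (Re z))) (cos (Im z), sin (Im z)).

Definition subordinate (g h : C -> C) : Prop :=
  exists w : C -> C,
    holo_on_disk w /\
    (forall z, in_disk z -> in_disk (w z)) /\
    w (RtoC 0) = RtoC 0 /\
    (forall z, in_disk z -> g z = h (w z)).

(* Main.v *)
Require Import Defs.
From Stdlib Require Import Reals Lra Psatz ClassicalEpsilon Classical.
From Coquelicot Require Import Coquelicot.
Open Scope R_scope.

Lemma evt2 (F : R -> R -> R) a b c d : a <= b -> c <= d ->
 (forall x y eps, 0<eps -> exists del, 0<del /\ forall x' y', Rabs(x'-x)<del -> Rabs(y'-y)<del -> Rabs(F x' y' - F x y) < eps) ->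
 exists x0 y0, (a<=x0<=b) /\ (c<=y0<=d) /\ forall x y, a<=x<=b -> c<=y<=d -> F x y <= F x0 y0.
Proof.
intros Hab Hcd HF.
assert (Hy : forall x, exists y, (forall y', c <= y' <= d -> F x y' <= F x y) /\ c <= y <= d).
{ intros x. destruct (continuity_ab_maj (F x) c d Hcd) as [y [H1 H2]].
  - intros y _. intros eps Heps. destruct (HF x y eps Heps) as [del [Hd Hdel]].
    exists del. split; [lra|]. intros y' [_ Hy']. unfold R_dist in *. simpl in *.
    unfold R_dist in Hy'. apply Hdel; [rewrite Rminus_diag, Rabs_R0; lra| exact Hy'].
  - exists y. split; [exact H1|lra]. }
set (ym := fun x => proj1_sig (constructive_indefinite_description _ (Hy x))).
assert (Hym : forall x, (forall y', c <= y' <= d -> F x y' <= F x (ym x)) /\ c <= ym x <= d).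
{ intros x. unfold ym. destruct (constructive_indefinite_description _ (Hy x)) as [y Hy']. exact Hy'. }
set (m := fun x => F x (ym x)).
assert (Hm : forall x, continuity_pt m x).
{ intros x eps Heps.
  destruct (HF x (ym x) eps Heps) as [d1 [Hd1 Hdel1]].
  assert (Hdel : forall y, exists del, 0 < del /\ forall x' y', Rabs(x'-x)<del -> Rabs(y'-y)<del -> Rabs(F x' y' - F x y) < eps).
  { intros y. apply HF; exact Heps. }
  set (dl := fun y => proj1_sig (constructive_indefinite_description _ (Hdel y))).
  assert (Hdl : forall y, 0 < dl y /\ forall x' y', Rabs(x'-x)<dl y -> Rabs(y'-y)<dl y -> Rabs(F x' y' - F x y) < eps).
  { intros y. unfold dl. destruct (constructive_indefinite_description _ (Hdel y)) as [e He]. exact He. }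
  destruct (compactness_value_1d c d (fun y => mkposreal (dl y) (proj1 (Hdl y)))) as [dd Hdd].
  exists (Rmin d1 dd). split. { apply Rmin_pos; [lra| apply cond_pos]. }
  intros x' [_ Hx']. unfold R_dist in *. simpl in *. unfold R_dist in Hx'.
  assert (Hx1 : Rabs (x' - x) < d1) by (eapply Rlt_le_trans; [exact Hx'| apply Rmin_l]).
  assert (Hx2 : Rabs (x' - x) < dd) by (eapply Rlt_le_trans; [exact Hx'| apply Rmin_r]).
  assert (L : m x - eps < m x').
  { unfold m. destruct (Hym x') as [H1 _]. specialize (H1 (ym x) (proj2 (Hym x))).
    specialize (Hdel1 x' (ym x) Hx1). rewrite Rminus_diag, Rabs_R0 in Hdel1. specialize (Hdel1 Hd1).
    apply Rabs_def2 in Hdel1. lra. }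
  assert (U : m x' < m x + eps).
  { unfold m. destruct (Hym x') as [_ Hc]. specialize (Hdd (ym x') Hc).
    apply NNPP. intro Hn. apply Hdd. intros [t [Ht [Ht1 Ht2]]]. apply Hn.
    simpl in Ht1, Ht2. destruct (Hdl t) as [_ Ht3].
    assert (Hxt : Rabs (x'-x) < dl t) by lra.
    specialize (Ht3 x' (ym x') Hxt).
    assert (Hyt : Rabs (ym x' - t) < dl t) by lra.
    specialize (Ht3 Hyt). apply Rabs_def2 in Ht3.
    destruct (Hym x) as [Hx3 _]. specialize (Hx3 t Ht). lra. }
  apply Rabs_def1; lra. }
destruct (continuity_ab_maj m a b Hab (fun x _ => Hm x)) as [x0 [H1 H2]].
exists x0, (ym x0). split; [exact H2|]. split; [apply Hym|].
intros x y Hx Hy'. specialize (H1 x Hx). unfold m in H1.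
destruct (Hym x) as [H3 _]. specialize (H3 y Hy'). lra.
Qed.

Lemma dpl_of_eps (f : R->R) t l :
  (forall eps, 0<eps -> exists del, 0<del /\ forall h, Rabs h < del -> Rabs (f (t+h) - f t - h*l) <= eps*Rabs h) ->
  derivable_pt_lim f t l.
Proof.
intros H eps Heps. destruct (H (eps/2)) as [del [Hd Hdel]]; [lra|].
exists (mkposreal del Hd). intros h Hh0 Hh. simpl in Hh.
specialize (Hdel h Hh).
replace ((f (t + h) - f t) / h - l) with ((f (t+h) - f t - h*l)/h) by (field; auto).
rewrite Rabs_div by auto. apply Rabs_pos_lt in Hh0.
apply (Rmult_lt_reg_r (Rabs h)); [lra|]. unfold Rdiv. rewrite Rmult_assoc, Rinv_l by lra. nra.
Qed.

Lemma eps_of_dpl (f : R->R) t l : derivable_pt_lim f t l ->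
  (forall eps, 0<eps -> exists del, 0<del /\ forall h, Rabs h < del -> Rabs (f (t+h) - f t - h*l) <= eps*Rabs h).
Proof.
intros H eps Heps. destruct (H eps Heps) as [del Hdel].
exists del. split; [apply cond_pos|]. intros h Hh.
destruct (Req_dec h 0) as [->|Hh0].
- rewrite Rplus_0_r. replace (f t - f t - 0*l) with 0 by ring. rewrite Rabs_R0. lra.
- specialize (Hdel h Hh0 Hh).
  replace (f (t + h) - f t - h * l) with (((f (t+h) - f t)/h - l) * h) by (field; auto).
  rewrite Rabs_mult. apply Rmult_le_compat_r; [apply Rabs_pos|lra].
Qed.

Lemma cderiv_eps (f : C -> C) z l : @is_derive C_AbsRing C_NormedModule f z l ->
  forall eps, 0<eps -> exists del, 0<del /\ forall h, Cmod h < del -> Cmod (f (z+h) - f z - h*l)%C <= eps * Cmod h.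
Proof.
unfold is_derive, filterdiff. intros [_ H] eps Heps.
specialize (H z (fun P HP => HP)).
specialize (H (mkposreal eps Heps)).
destruct H as [del Hdel]. exists del. split; [apply cond_pos|].
intros h Hh. specialize (Hdel (z+h)%C).
assert (Hm : minus (z+h)%C z = h).
{ unfold minus, plus, opp; simpl. apply injective_projections; simpl; ring. }
assert (Hb : ball z del (z+h)%C).
{ change (Cmod (minus (z+h)%C z) < del). rewrite Hm. exact Hh. }
specialize (Hdel Hb). simpl in Hdel.
unfold minus, plus, opp, scal, norm in Hdel; simpl in Hdel.
unfold mult in Hdel; simpl in Hdel.
replace (z+h + - z)%C with h in Hdel by ring.
replace (f (z + h) - f z - h * l)%C with (f (z + h) + - f z + - (h * l))%C by ring.
exact Hdel.
Qed.

Lemma Cmod_Re_le z : Rabs (Re z) <= Cmod z.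
Proof. apply (Rle_trans _ _ _ (Rmax_l _ (Rabs (snd z)))). apply Rmax_Cmod. Qed.
Lemma Cmod_Im_le z : Rabs (Im z) <= Cmod z.
Proof. apply (Rle_trans _ _ _ (Rmax_r (Rabs (fst z)) _)). apply Rmax_Cmod. Qed.
Lemma Cmod_le_ReIm z : Cmod z <= Rabs (Re z) + Rabs (Im z).
Proof.
destruct z as [x y]. unfold Cmod, Re, Im; simpl.
apply Rsqr_incr_0_var. 2:{ pose proof (Rabs_pos x); pose proof (Rabs_pos y); lra. }
rewrite Rsqr_sqrt by nra. unfold Rsqr.
rewrite Rmult_1_r, Rmult_1_r.
assert (x*x = Rabs x * Rabs x) by (rewrite <- Rabs_mult; rewrite Rabs_pos_eq; nra).
assert (y*y = Rabs y * Rabs y) by (rewrite <- Rabs_mult; rewrite Rabs_pos_eq; nra).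
pose proof (Rabs_pos x); pose proof (Rabs_pos y). nra.
Qed.

Lemma path_comp (f : C -> C) l (g : R -> C) t (v : C) :
 @is_derive C_AbsRing C_NormedModule f (g t) l ->
 is_derive (fun s => Re (g s)) t (Re v) -> is_derive (fun s => Im (g s)) t (Im v) ->
 is_derive (fun s => Re (f (g s))) t (Re (v*l)) /\ is_derive (fun s => Im (f (g s))) t (Im (v*l)).
Proof.
intros Hf Hx Hy. apply is_derive_Reals in Hx. apply is_derive_Reals in Hy.
pose proof (eps_of_dpl _ _ _ Hx) as Ex. pose proof (eps_of_dpl _ _ _ Hy) as Ey.
pose proof (cderiv_eps _ _ _ Hf) as Ef.
set (M := Cmod v + 1 + Cmod l).
assert (HM : 0 < M) by (unfold M; pose proof (Cmod_ge_0 v); pose proof (Cmod_ge_0 l); lra).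
assert (Key : forall eps, 0 < eps -> exists del, 0 < del /\ forall h, Rabs h < del ->
   Cmod (f (g (Rplus t h)) - f (g t) - RtoC h * (v*l))%C <= eps * Rabs h).
{ intros eps Heps. set (e := Rmin (eps / (2*M)) (1/2)).
  assert (He : 0 < e) by (apply Rmin_pos; [apply Rdiv_lt_0_compat|]; lra).
  assert (HeM : 2 * (e * M) <= eps).
  { unfold e. apply (Rle_trans _ (2 * (eps/(2*M) * M))). apply Rmult_le_compat_l; [lra|]. apply Rmult_le_compat_r; [lra|apply Rmin_l].
    right. field. lra. }
  destruct (Ex e He) as [d1 [Hd1 H1]]. destruct (Ey e He) as [d2 [Hd2 H2]].
  destruct (Ef e He) as [d3 [Hd3 H3]].
  exists (Rmin (Rmin d1 d2) (d3 / M)). split.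
  { apply Rmin_pos; [apply Rmin_pos|apply Rdiv_lt_0_compat]; lra. }
  intros h Hh.
  assert (Hh1 : Rabs h < d1) by (eapply Rlt_le_trans; [exact Hh|]; eapply Rle_trans; [apply Rmin_l|apply Rmin_l]).
  assert (Hh2 : Rabs h < d2) by (eapply Rlt_le_trans; [exact Hh|]; eapply Rle_trans; [apply Rmin_l|apply Rmin_r]).
  assert (Hh3 : Rabs h < d3 / M) by (eapply Rlt_le_trans; [exact Hh|]; apply Rmin_r).
  set (k := (g (Rplus t h) - g t)%C).
  assert (Hk : Cmod (k - RtoC h * v)%C <= 2 * e * Rabs h).
  { eapply Rle_trans; [apply Cmod_le_ReIm|].
    specialize (H1 h Hh1). specialize (H2 h Hh2).
    assert (E1 : Re (k - RtoC h * v)%C = Re (g (Rplus t h)) - Re (g t) - h * Re v) by (unfold k, Re; simpl; ring).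
    assert (E2 : Im (k - RtoC h * v)%C = Im (g (Rplus t h)) - Im (g t) - h * Im v) by (unfold k, Im; simpl; ring).
    rewrite E1, E2.
    lra. }
  assert (Hkb : Cmod k <= (Cmod v + 1) * Rabs h).
  { replace k with ((k - RtoC h * v) + RtoC h * v)%C by ring.
    eapply Rle_trans; [apply Cmod_triangle|]. rewrite Cmod_mult, Cmod_R.
    assert (2*e <= 1) by (unfold e; pose proof (Rmin_r (eps/(2*M)) (1/2)); lra).
    pose proof (Rabs_pos h). nra. }
  assert (Hk3 : Cmod k < d3).
  { eapply Rle_lt_trans; [exact Hkb|].
    apply (Rle_lt_trans _ (M * Rabs h)). apply Rmult_le_compat_r; [apply Rabs_pos|].
    unfold M; pose proof (Cmod_ge_0 l); lra.
    apply (Rmult_lt_compat_l M) in Hh3; [|lra]. replace (M * (d3/M)) with d3 in Hh3 by (field; lra). lra. }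
  specialize (H3 k Hk3). replace (g t + k)%C with (g (Rplus t h)) in H3 by (unfold k; ring).
  replace (f (g (Rplus t h)) - f (g t) - RtoC h * (v * l))%C with
    ((f (g (Rplus t h)) - f (g t) - k * l) + (k - RtoC h * v) * l)%C by ring.
  eapply Rle_trans; [apply Cmod_triangle|]. rewrite Cmod_mult.
  pose proof (Cmod_ge_0 l). pose proof (Rabs_pos h).
  apply (Rle_trans _ (e * ((Cmod v + 1) * Rabs h) + 2 * e * Rabs h * Cmod l)).
  { apply Rplus_le_compat. eapply Rle_trans; [exact H3|]. apply Rmult_le_compat_l; lra.
    apply Rmult_le_compat_r; lra. }
  apply (Rle_trans _ (2 * (e * M) * Rabs h)).
  { unfold M. pose proof (Cmod_ge_0 v).
    assert (0 <= e * ((Cmod v + 1) * Rabs h)) by (apply Rmult_le_pos; [lra|apply Rmult_le_pos; lra]).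
    nra. }
  apply Rmult_le_compat_r; lra. }
split; apply is_derive_Reals; apply dpl_of_eps; intros eps Heps; destruct (Key eps Heps) as [del [Hd Hdel]];
  exists del; split; auto; intros h Hh; specialize (Hdel h Hh).
- eapply Rle_trans; [|exact Hdel]. eapply Rle_trans; [|apply Cmod_Re_le]. right. f_equal.
  unfold Re; simpl. ring.
- eapply Rle_trans; [|exact Hdel]. eapply Rle_trans; [|apply Cmod_Im_le]. right. f_equal.
  unfold Im; simpl. ring.
Qed.

Lemma abs_le x a : Rabs x <= a -> -a <= x <= a.
Proof. unfold Rabs; destruct Rcase_abs; intros; lra. Qed.

Lemma left_max (g : R -> R) t0 l del : 0 < del -> is_derive g t0 l ->
  (forall h, 0 < h < del -> g (t0 - h) <= g t0) -> 0 <= l.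
Proof.
intros Hd Hg Hm. apply is_derive_Reals in Hg. destruct (Rle_lt_dec 0 l) as [|Hl]; [auto|exfalso].
destruct (eps_of_dpl _ _ _ Hg (-l/2)) as [e [He Hde]]; [lra|].
set (h := Rmin e del / 2).
assert (Hh : 0 < h) by (unfold h; apply Rdiv_lt_0_compat; [apply Rmin_pos|]; lra).
assert (Hh1 : h < e) by (unfold h; pose proof (Rmin_l e del); lra).
assert (Hh2 : h < del) by (unfold h; pose proof (Rmin_r e del); lra).
specialize (Hde (-h)). rewrite Rabs_Ropp, Rabs_pos_eq in Hde by lra. specialize (Hde Hh1).
specialize (Hm h (conj Hh Hh2)). replace (t0 + - h) with (t0 - h) in Hde by ring.
apply abs_le in Hde. nra.
Qed.

Lemma right_max (g : R -> R) t0 l del : 0 < del -> is_derive g t0 l ->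
  (forall h, 0 < h < del -> g (t0 + h) <= g t0) -> l <= 0.
Proof.
intros Hd Hg Hm. apply is_derive_Reals in Hg. destruct (Rle_lt_dec l 0) as [|Hl]; [auto|exfalso].
destruct (eps_of_dpl _ _ _ Hg (l/2)) as [e [He Hde]]; [lra|].
set (h := Rmin e del / 2).
assert (Hh : 0 < h) by (unfold h; apply Rdiv_lt_0_compat; [apply Rmin_pos|]; lra).
assert (Hh1 : h < e) by (unfold h; pose proof (Rmin_l e del); lra).
assert (Hh2 : h < del) by (unfold h; pose proof (Rmin_r e del); lra).
specialize (Hde h). rewrite Rabs_pos_eq in Hde by lra. specialize (Hde Hh1).
specialize (Hm h (conj Hh Hh2)).
apply abs_le in Hde. nra.
Qed.


Lemma max_second (g g' : R -> R) t0 d del : 0 < del ->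
  (forall t, Rabs (t - t0) < del -> is_derive g t (g' t)) -> is_derive g' t0 d ->
  (forall t, Rabs (t - t0) < del -> g t <= g t0) -> g' t0 = 0 /\ d <= 0.
Proof.
intros Hd Hg Hg' Hm.
assert (H0 : is_derive g t0 (g' t0)) by (apply Hg; rewrite Rminus_diag, Rabs_R0; lra).
assert (Z : g' t0 = 0).
{ apply Rle_antisym.
  - apply (right_max g t0 _ del Hd H0). intros h Hh. apply Hm.
    replace (t0 + h - t0) with h by ring. rewrite Rabs_pos_eq; lra.
  - apply (left_max g t0 _ del Hd H0). intros h Hh. apply Hm.
    replace (t0 - h - t0) with (-h) by ring. rewrite Rabs_Ropp, Rabs_pos_eq; lra. }
split; [exact Z|].
destruct (Rle_lt_dec d 0) as [|Hdp]; [auto|exfalso].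
apply is_derive_Reals in Hg'.
destruct (eps_of_dpl _ _ _ Hg' (d/2)) as [e [He Hde]]; [lra|].
set (h := Rmin e del / 2).
assert (Hh : 0 < h) by (unfold h; apply Rdiv_lt_0_compat; [apply Rmin_pos|]; lra).
assert (Hh1 : h < e) by (unfold h; pose proof (Rmin_l e del); lra).
assert (Hh2 : h < del) by (unfold h; pose proof (Rmin_r e del); lra).
assert (Pos : forall s, 0 < s <= h -> 0 < g' (t0 + s)).
{ intros s Hs. specialize (Hde s). rewrite Rabs_pos_eq in Hde by lra.
  specialize (Hde ltac:(lra)). rewrite Z in Hde. apply abs_le in Hde. nra. }
assert (NN : forall s, 0 <= s <= h -> 0 <= g' (t0 + s)).
{ intros s Hs. destruct (Req_dec s 0) as [->|Hs0]. rewrite Rplus_0_r, Z; lra. left; apply Pos; lra. }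
assert (MV : forall a b, t0 <= a < b -> b <= t0 + h -> exists c, a <= c <= b /\ g b - g a = g' c * (b - a)).
{ intros a b Hab Hb. destruct (MVT_gen g a b g') as [c [Hc Hc2]].
  - intros x Hx. rewrite Rmin_left in Hx by lra. rewrite Rmax_right in Hx by lra.
    apply Hg. apply Rabs_def1; lra.
  - intros x Hx. rewrite Rmin_left in Hx by lra. rewrite Rmax_right in Hx by lra.
    apply derivable_continuous_pt. exists (g' x). apply is_derive_Reals. apply Hg.
    apply Rabs_def1; lra.
  - rewrite Rmin_left in Hc by lra. rewrite Rmax_right in Hc by lra. exists c; split; auto. }
destruct (MV t0 (t0 + h/2)) as [c1 [Hc1 E1]]; [lra|lra|].
destruct (MV (t0 + h/2) (t0 + h)) as [c2 [Hc2 E2]]; [lra|lra|].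
assert (P1 : 0 <= g' c1) by (replace c1 with (t0 + (c1 - t0)) by ring; apply NN; lra).
assert (P2 : 0 < g' c2) by (replace c2 with (t0 + (c2 - t0)) by ring; apply Pos; lra).
assert (Hm2 : g (t0 + h) <= g t0) by (apply Hm; replace (t0 + h - t0) with h by ring; rewrite Rabs_pos_eq; lra).
nra.
Qed.

Definition cpd (a : R -> C) t (d : C) :=
  is_derive (fun s => Re (a s)) t (Re d) /\ is_derive (fun s => Im (a s)) t (Im d).

Definition dot (a b : C) := Re a * Re b + Im a * Im b.

Lemma cpd_comp (f : C -> C) l (a : R -> C) t v :
  @is_derive C_AbsRing C_NormedModule f (a t) l -> cpd a t v -> cpd (fun s => f (a s)) t (v * l)%C.
Proof. intros Hf [H1 H2]. apply (path_comp f l a t v Hf H1 H2). Qed.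

Lemma cpd_mult (a b : R -> C) t da db : cpd a t da -> cpd b t db ->
  cpd (fun s => a s * b s)%C t (da * b t + a t * db)%C.
Proof.
intros [Ha1 Ha2] [Hb1 Hb2]. split.
- eapply is_derive_ext. { intros s. symmetry. change (Re (a s * b s)%C) with (Re (a s) * Re (b s) - Im (a s) * Im (b s)). reflexivity. }
  eapply is_derive_ext. { intros s. reflexivity. }
  replace (Re (da * b t + a t * db)%C) with ((Re da * Re (b t) + Re (a t) * Re db) - (Im da * Im (b t) + Im (a t) * Im db))
   by (unfold Re, Im; simpl; ring).
  apply (is_derive_minus (fun s => Re (a s) * Re (b s)) (fun s => Im (a s) * Im (b s))).
  + apply (is_derive_mult (fun s => Re (a s)) (fun s => Re (b s))); auto. intros; apply Rmult_comm.
  + apply (is_derive_mult (fun s => Im (a s)) (fun s => Im (b s))); auto. intros; apply Rmult_comm.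
- eapply is_derive_ext. { intros s. symmetry. change (Im (a s * b s)%C) with (Re (a s) * Im (b s) + Im (a s) * Re (b s)). reflexivity. }
  replace (Im (da * b t + a t * db)%C) with ((Re da * Im (b t) + Re (a t) * Im db) + (Im da * Re (b t) + Im (a t) * Re db))
   by (unfold Re, Im; simpl; ring).
  apply (is_derive_plus (fun s => Re (a s) * Im (b s)) (fun s => Im (a s) * Re (b s))).
  + apply (is_derive_mult (fun s => Re (a s)) (fun s => Im (b s))); auto. intros; apply Rmult_comm.
  + apply (is_derive_mult (fun s => Im (a s)) (fun s => Re (b s))); auto. intros; apply Rmult_comm.
Qed.

Lemma cpd_const (c : C) t : cpd (fun _ => c) t 0%C.
Proof. split; exact (is_derive_const _ _). Qed.

Lemma cpd_scal (c : C) (a : R -> C) t da : cpd a t da -> cpd (fun s => c * a s)%C t (c * da)%C.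
Proof.
intros H. pose proof (cpd_mult (fun _ => c) a t 0%C da (cpd_const c t) H) as H2.
replace (c * da)%C with (0 * a t + c * da)%C by ring. exact H2.
Qed.

Lemma dot_deriv (a b : R -> C) t da db : cpd a t da -> cpd b t db ->
  is_derive (fun s => dot (a s) (b s)) t (dot da (b t) + dot (a t) db).
Proof.
intros [Ha1 Ha2] [Hb1 Hb2]. unfold dot.
replace (Re da * Re (b t) + Im da * Im (b t) + (Re (a t) * Re db + Im (a t) * Im db))
 with ((Re da * Re (b t) + Re (a t) * Re db) + (Im da * Im (b t) + Im (a t) * Im db)) by ring.
apply (is_derive_plus (fun s => Re (a s) * Re (b s)) (fun s => Im (a s) * Im (b s))).
+ apply (is_derive_mult (fun s => Re (a s)) (fun s => Re (b s))); auto. intros; apply Rmult_comm.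
+ apply (is_derive_mult (fun s => Im (a s)) (fun s => Im (b s))); auto. intros; apply Rmult_comm.
Qed.

Definition pol (r t : R) : C := (r * cos t, r * sin t).

Lemma cpd_pol_t r t : cpd (fun s => pol r s) t (Ci * pol r t)%C.
Proof.
split; unfold pol, Re, Im; simpl.
- replace (0 * (r * cos t) - 1 * (r * sin t)) with (r * (- sin t)) by ring.
  apply is_derive_scal. apply is_derive_Reals. apply derivable_pt_lim_cos.
- replace (0 * (r * sin t) + 1 * (r * cos t)) with (r * cos t) by ring.
  apply is_derive_scal. apply is_derive_Reals. apply derivable_pt_lim_sin.
Qed.

Lemma cpd_pol_r r t : cpd (fun s => pol s t) r (pol 1 t).
Proof.
split; unfold pol, Re, Im; simpl.
- replace (1 * cos t) with (1 * cos t) by ring.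
  apply (is_derive_scal_l (fun s => s) r 1 (cos t)). apply is_derive_Reals, derivable_pt_lim_id.
- apply (is_derive_scal_l (fun s => s) r 1 (sin t)). apply is_derive_Reals, derivable_pt_lim_id.
Qed.

Lemma cpd_Cipol_t r t : cpd (fun s => Ci * pol r s)%C t (Ci * (Ci * pol r t))%C.
Proof. apply cpd_scal. apply cpd_pol_t. Qed.

Lemma Cmod_pol r t : Cmod (pol r t) = Rabs r.
Proof.
unfold Cmod, pol; simpl. rewrite <- sqrt_Rsqr_abs. f_equal.
pose proof (sin2_cos2 t). unfold Rsqr in *. nra.
Qed.

Lemma pol_2PI r t : pol r (t + 2*PI) = pol r t.
Proof. unfold pol. rewrite cos_plus, sin_plus, cos_2PI, sin_2PI. f_equal; ring. Qed.
Lemma pol_m2PI r t : pol r (t - 2*PI) = pol r t.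
Proof. rewrite <- (pol_2PI r (t - 2*PI)). f_equal. ring. Qed.

Lemma lip_aux (f df : R -> R) a b : (forall x, is_derive f x (df x)) -> (forall x, Rabs (df x) <= 1) ->
  Rabs (f a - f b) <= Rabs (a - b).
Proof.
intros Hf Hd. destruct (MVT_gen f b a df) as [c [_ Hc]].
- intros; apply Hf.
- intros x _. apply derivable_continuous_pt. exists (df x). apply is_derive_Reals, Hf.
- rewrite Hc, Rabs_mult. rewrite <- (Rmult_1_l (Rabs (a - b))) at 2.
  apply Rmult_le_compat_r; [apply Rabs_pos|apply Hd].
Qed.

Lemma cos_lip a b : Rabs (cos a - cos b) <= Rabs (a - b).
Proof.
apply (lip_aux cos (fun x => - sin x)).
- intros; apply is_derive_Reals, derivable_pt_lim_cos.
- intros; rewrite Rabs_Ropp. pose proof (SIN_bound x). apply Rabs_le; lra.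
Qed.
Lemma sin_lip a b : Rabs (sin a - sin b) <= Rabs (a - b).
Proof.
apply (lip_aux sin cos).
- intros; apply is_derive_Reals, derivable_pt_lim_sin.
- intros. pose proof (COS_bound x). apply Rabs_le; lra.
Qed.

Lemma pol_close r r' t t' : Rabs r <= 1 ->
  Cmod (pol r' t' - pol r t)%C <= 2 * Rabs (r' - r) + 2 * Rabs (t' - t).
Proof.
intros Hr. eapply Rle_trans; [apply Cmod_le_ReIm|]. unfold pol, Re, Im; simpl.
replace (r' * cos t' + - (r * cos t)) with ((r' - r) * cos t' + r * (cos t' - cos t)) by ring.
replace (r' * sin t' + - (r * sin t)) with ((r' - r) * sin t' + r * (sin t' - sin t)) by ring.
pose proof (cos_lip t' t). pose proof (sin_lip t' t).
pose proof (COS_bound t'). pose proof (SIN_bound t').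
assert (Rabs (cos t') <= 1) by (apply Rabs_le; lra).
assert (Rabs (sin t') <= 1) by (apply Rabs_le; lra).
pose proof (Rabs_pos (r' - r)). pose proof (Rabs_pos (t' - t)). pose proof (Rabs_pos r).
pose proof (Rabs_triang ((r' - r) * cos t') (r * (cos t' - cos t))).
pose proof (Rabs_triang ((r' - r) * sin t') (r * (sin t' - sin t))).
rewrite !Rabs_mult in *.
pose proof (Rabs_pos (cos t' - cos t)). pose proof (Rabs_pos (sin t' - sin t)).
pose proof (Rabs_pos (cos t')). pose proof (Rabs_pos (sin t')).
nra.
Qed.

Definition clamp (r x : R) := Rmax 0 (Rmin x r).
Lemma clamp_lip r x y : 0 <= r -> Rabs (clamp r x - clamp r y) <= Rabs (x - y).
Proof. intros. unfold clamp, Rmax, Rmin. repeat destruct Rle_dec; apply Rabs_le; unfold Rabs; destruct Rcase_abs; lra. Qed.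
Lemma clamp_bound r x : 0 <= r -> 0 <= clamp r x <= r.
Proof. intros. unfold clamp, Rmax, Rmin. repeat destruct Rle_dec; lra. Qed.
Lemma clamp_id r x : 0 <= x <= r -> clamp r x = x.
Proof. intros. unfold clamp, Rmax, Rmin. repeat destruct Rle_dec; lra. Qed.

Definition ctsC (F : C -> R) z := forall eps, 0 < eps -> exists del, 0 < del /\
  forall w, Cmod (w - z)%C < del -> Rabs (F w - F z) < eps.

Lemma cts2_of_ctsC (F : C -> R) r : 0 <= r <= 1 -> (forall z, Cmod z <= r -> ctsC F z) ->
  forall x y eps, 0<eps -> exists del, 0<del /\ forall x' y', Rabs(x'-x)<del -> Rabs(y'-y)<del ->
   Rabs (F (pol (clamp r x') y') - F (pol (clamp r x) y)) < eps.
Proof.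
intros Hr HF x y eps Heps.
assert (Hz : Cmod (pol (clamp r x) y) <= r).
{ rewrite Cmod_pol. pose proof (clamp_bound r x (proj1 Hr)). rewrite Rabs_pos_eq; lra. }
destruct (HF _ Hz eps Heps) as [d [Hd Hdd]].
exists (d/4). split; [lra|]. intros x' y' Hx Hy. apply Hdd.
eapply Rle_lt_trans. apply pol_close.
{ pose proof (clamp_bound r x (proj1 Hr)). rewrite Rabs_pos_eq; lra. }
pose proof (clamp_lip r x' x (proj1 Hr)). lra.
Qed.

Lemma polar_repr (w : C) : 0 < Cmod w -> exists t, 0 <= t <= 2*PI /\ w = pol (Cmod w) t.
Proof.
intros Hw. set (r := Cmod w) in *. destruct w as [x y].
assert (Hr2 : r * r = x*x + y*y).
{ unfold r, Cmod; simpl. rewrite sqrt_sqrt; [ring|nra]. }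
assert (Hb : -1 <= x / r <= 1).
{ assert (Hxr: -r <= x <= r) by (split; nra).
  split.
  - apply (Rmult_le_reg_r r); [lra|]. unfold Rdiv; rewrite Rmult_assoc, Rinv_l by lra. lra.
  - apply (Rmult_le_reg_r r); [lra|]. unfold Rdiv; rewrite Rmult_assoc, Rinv_l by lra. lra. }
assert (Hs : sqrt (1 - (x/r)²) = Rabs y / r).
{ assert (E : 1 - (x/r)² = (y/r)²).
  { replace 1 with ((x*x+y*y)/(r*r)) by (rewrite <- Hr2; field; lra). unfold Rsqr; field; lra. }
  rewrite E, sqrt_Rsqr_abs. unfold Rdiv. rewrite Rabs_mult, Rabs_inv, (Rabs_pos_eq r) by lra. reflexivity. }
pose proof (acos_bound (x/r)) as Hab.
destruct (Rle_lt_dec 0 y) as [Hy|Hy].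
- exists (acos (x/r)). split; [pose proof PI_RGT_0; lra|].
  unfold pol. rewrite cos_acos, sin_acos by exact Hb. rewrite Hs, Rabs_pos_eq by lra.
  f_equal; field; lra.
- exists (2*PI - acos (x/r)). split; [pose proof PI_RGT_0; lra|].
  unfold pol. replace (2*PI - acos (x/r)) with (- acos (x/r) + 2*PI) by ring.
  rewrite cos_plus, sin_plus, cos_2PI, sin_2PI, cos_neg, sin_neg.
  rewrite cos_acos, sin_acos by exact Hb. rewrite Hs, Rabs_left by lra.
  f_equal; field; lra.
Qed.

Lemma dot_sym a b : dot a b = dot b a.
Proof. unfold dot; ring. Qed.
Lemma dot_scalR a b r : dot a (RtoC r * b)%C = r * dot a b.
Proof. unfold dot, Re, Im; simpl; ring. Qed.
Lemma dot_add a b c : dot a (b + c)%C = dot a b + dot a c.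
Proof. unfold dot, Re, Im; simpl; ring. Qed.
Lemma dot_opp a b : dot a (- b)%C = - dot a b.
Proof. unfold dot, Re, Im; simpl; ring. Qed.
Lemma dot_Ci a : dot (Ci * a)%C (Ci * a)%C = dot a a.
Proof. unfold dot, Re, Im; simpl; ring. Qed.
Lemma dot_rot a b : (dot a b)^2 + (dot a (Ci * b)%C)^2 = dot a a * dot b b.
Proof. unfold dot, Re, Im; simpl; ring. Qed.
Lemma dot_cs a b : (dot a b)^2 <= dot a a * dot b b.
Proof. rewrite <- dot_rot. pose proof (pow2_ge_0 (dot a (Ci * b)%C)). lra. Qed.
Lemma dot_Cmod a : dot a a = (Cmod a)^2.
Proof. unfold Cmod, dot, Re, Im. rewrite pow2_sqrt; [simpl; ring|]. destruct a; simpl; nra. Qed.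
Lemma dot_nonneg a : 0 <= dot a a.
Proof. unfold dot. nra. Qed.
Lemma pol_scal r t : pol r t = (RtoC r * pol 1 t)%C.
Proof. unfold pol. apply injective_projections; simpl; ring. Qed.

Definition dd := 1/100.
Definition W (x : R) := exp (-(7/4) * ln x + dd * (x*x)).
Definition om (x : R) := -(7/4) / x + 2 * dd * x.
Definition om' (x : R) := (7/4) / (x*x) + 2 * dd.

Lemma W_pos x : 0 < W x.
Proof. apply exp_pos. Qed.

Lemma W_der x : 0 < x -> is_derive W x (W x * om x).
Proof.
intros Hx. unfold W, om. auto_derive. { repeat split; lra. }
unfold dd. field. lra.
Qed.

Lemma Wom_der x : 0 < x -> is_derive (fun y => W y * om y) x (W x * (om x * om x + om' x)).
Proof.
intros Hx. unfold W, om, om'. auto_derive. { repeat split; lra. }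
unfold dd. field. lra.
Qed.

Lemma alg_boundary N X Y P Q E rho a1 a2 :
  0 < N -> 0 < rho <= 1 -> X*X = N*P -> P - X - Y <= 0 -> 0 <= 2*X/rho + N*om rho ->
  (a1*X + a2*Y)^2 <= N*Q -> Q < E*E -> E*E <= a1 - a2 -> 0 < a2 -> 26/10 <= E -> N < 1/5.
Proof.
intros HN Hr HXP HT HR HS HQ HE Ha2 HE2.
unfold om, dd in HR.
assert (H1 : 0 <= X + N * (- (7/8) + 1/100 * (rho*rho))).
{ apply (Rmult_le_compat_l (rho/2)) in HR; [|lra].
  rewrite Rmult_0_r in HR. replace (rho / 2 * (2 * X / rho + N * (- (7 / 4) / rho + 2 * (1 / 100) * rho)))
   with (X + N * (- (7/8) + 1/100 * (rho*rho))) in HR by (field; lra). exact HR. }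
assert (Hrr : rho*rho <= 1) by nra. assert (HNr : N*(rho*rho) <= N) by nra.
assert (HX : X >= 865/1000 * N) by nra.
assert (HP : 0 <= P) by nra.
assert (HSX : a1*X + a2*Y >= (E*E) * X) by nra.
assert (HS2 : a1*X + a2*Y >= (E*E) * (865/1000 * N)) by nra.
assert (HEE : E*E >= 676/100) by nra.
assert (Hpos : (E*E) * (865/1000 * N) > 0) by nra.
assert (HS3 : ((E*E) * (865/1000 * N))^2 <= N*Q) by nra.
assert (HS4 : ((E*E) * (865/1000 * N))^2 < N*(E*E)) by nra.
assert (HS5 : (E*E) * (865/1000)^2 * N < 1).
{ apply (Rmult_lt_reg_l (N * (E*E))); [nra|]. nra. }
nra.
Qed.

Lemma alg_interior N X Y P rho :
  0 < N -> 0 < rho -> X*X = N*P -> P - X - Y <= 0 -> 2*X/rho + N*om rho = 0 ->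
  2*(P+Y)/(rho*rho) + 2*(2*X/rho)*om rho + N*(om rho * om rho + om' rho) <= 0 -> False.
Proof.
intros HN Hr HXP HT H1 H2.
set (w := om rho) in *.
assert (E : 2*X/rho * rho = 2*X) by (field; lra).
assert (E2 : 2*X/rho = - (N * w)) by lra.
assert (HX : X = - rho * w * N / 2).
{ assert (2*X = - (N*w) * rho) by (rewrite <- E, E2; ring). lra. }
assert (HP : P = X*X/N) by (rewrite HXP; field; lra).
assert (HY : Y >= P - X) by lra.
assert (H3 : 2*(P+Y)/(rho*rho) >= 2*(2*P - X)/(rho*rho)).
{ unfold Rdiv. apply Rle_ge. apply Rmult_le_compat_r. apply Rlt_le, Rinv_0_lt_compat; nra. lra. }
assert (H4 : 2*(2*P - X)/(rho*rho) + 2*(2*X/rho)*w + N*(w*w + om' rho) = 4*dd*N).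
{ rewrite HP, HX. unfold w, om, om'. field. split; lra. }
unfold dd in H4. lra.
Qed.

Lemma ctsC_ext F1 F2 z : (forall w, F1 w = F2 w) -> ctsC F1 z -> ctsC F2 z.
Proof. intros He H eps Heps. destruct (H eps Heps) as [d [Hd Hdd]]. exists d; split; auto.
intros w Hw. rewrite <- !He. auto. Qed.

Lemma Cmod_rev a b : Rabs (Cmod a - Cmod b) <= Cmod (a - b)%C.
Proof.
apply Rabs_le. split.
- pose proof (Cmod_triangle (b - a)%C a). replace (b - a + a)%C with b in H by ring.
  replace (b - a)%C with (- (a - b))%C in H by ring. rewrite Cmod_opp in H. lra.
- pose proof (Cmod_triangle (a - b)%C b). replace (a - b + b)%C with a in H by ring. lra.
Qed.

Lemma ctsC_u_mod (u : C -> C) l z : @is_derive C_AbsRing C_NormedModule u z l -> ctsC (fun w => Cmod (u w)) z.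
Proof.
intros Hu eps Heps. destruct (cderiv_eps u z l Hu 1 Rlt_0_1) as [d0 [Hd0 Hdd0]].
set (M := Cmod l + 1). assert (HM : 0 < M) by (unfold M; pose proof (Cmod_ge_0 l); lra).
exists (Rmin d0 (eps / M)). split. { apply Rmin_pos; [lra|apply Rdiv_lt_0_compat; lra]. }
intros w Hw. set (h := (w - z)%C).
assert (Hh1 : Cmod h < d0) by (eapply Rlt_le_trans; [exact Hw|apply Rmin_l]).
assert (Hh2 : Cmod h < eps / M) by (eapply Rlt_le_trans; [exact Hw|apply Rmin_r]).
specialize (Hdd0 h Hh1). replace (z + h)%C with w in Hdd0 by (unfold h; ring).
eapply Rle_lt_trans; [apply Cmod_rev|].
replace (u w - u z)%C with ((u w - u z - h * l) + h * l)%C by ring.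
eapply Rle_lt_trans; [apply Cmod_triangle|]. rewrite Cmod_mult.
apply (Rle_lt_trans _ (Cmod h * M)). { unfold M. pose proof (Cmod_ge_0 h). nra. }
apply (Rmult_lt_compat_r M) in Hh2; [|lra]. replace (eps / M * M) with eps in Hh2 by (field; lra). lra.
Qed.

Lemma ctsC_Cmod z : ctsC Cmod z.
Proof. intros eps Heps. exists eps. split; auto. intros w Hw. eapply Rle_lt_trans; [apply Cmod_rev|exact Hw]. Qed.

Lemma ctsC_comp (phi : R -> R) F z : continuity_pt phi (F z) -> ctsC F z -> ctsC (fun w => phi (F w)) z.
Proof.
intros Hp HF eps Heps. destruct (Hp eps Heps) as [a [Ha Haa]].
destruct (HF a Ha) as [d [Hd Hdd]]. exists d. split; auto. intros w Hw.
destruct (Req_dec (F w) (F z)) as [E|E].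
- rewrite E, Rminus_diag, Rabs_R0. lra.
- apply (Haa (F w)). split. split; [exact I|auto]. apply Hdd, Hw.
Qed.

Lemma ctsC_mult F1 F2 z : ctsC F1 z -> ctsC F2 z -> ctsC (fun w => F1 w * F2 w) z.
Proof.
intros H1 H2 eps Heps.
set (A := Rabs (F1 z) + 1). set (B := Rabs (F2 z) + 1).
assert (HA : 0 < A) by (unfold A; pose proof (Rabs_pos (F1 z)); lra).
assert (HB : 0 < B) by (unfold B; pose proof (Rabs_pos (F2 z)); lra).
set (e1 := Rmin 1 (eps / (2*B))). set (e2 := eps / (2*A)).
assert (He1 : 0 < e1) by (unfold e1; apply Rmin_pos; [lra|apply Rdiv_lt_0_compat; lra]).
assert (He2 : 0 < e2) by (unfold e2; apply Rdiv_lt_0_compat; lra).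
destruct (H1 e1 He1) as [d1 [Hd1 Hdd1]]. destruct (H2 (Rmin 1 e2) (Rmin_pos _ _ Rlt_0_1 He2)) as [d2 [Hd2 Hdd2]].
exists (Rmin d1 d2). split; [apply Rmin_pos; lra|]. intros w Hw.
assert (W1 : Rabs (F1 w - F1 z) < e1) by (apply Hdd1; eapply Rlt_le_trans; [exact Hw|apply Rmin_l]).
assert (W2 : Rabs (F2 w - F2 z) < Rmin 1 e2) by (apply Hdd2; eapply Rlt_le_trans; [exact Hw|apply Rmin_r]).
assert (W2b : Rabs (F2 w) <= B).
{ unfold B. pose proof (Rmin_l 1 e2). pose proof (Rabs_triang (F2 w - F2 z) (F2 z)).
  replace (F2 w - F2 z + F2 z) with (F2 w) in H0 by ring. lra. }
replace (F1 w * F2 w - F1 z * F2 z) with ((F1 w - F1 z) * F2 w + F1 z * (F2 w - F2 z)) by ring.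
eapply Rle_lt_trans; [apply Rabs_triang|]. rewrite !Rabs_mult.
assert (e1 * B <= eps / 2).
{ unfold e1. apply (Rle_trans _ (eps / (2*B) * B)). apply Rmult_le_compat_r; [lra|apply Rmin_r]. right; field; lra. }
assert (A * e2 = eps / 2) by (unfold e2; field; lra).
pose proof (Rmin_r 1 e2).
pose proof (Rabs_pos (F1 w - F1 z)). pose proof (Rabs_pos (F2 w)). pose proof (Rabs_pos (F1 z)).
pose proof (Rabs_pos (F2 w - F2 z)).
assert (Rabs (F1 w - F1 z) * Rabs (F2 w) <= e1 * B) by (apply Rmult_le_compat; lra).
assert (Rabs (F1 z) * Rabs (F2 w - F2 z) < A * e2).
{ apply (Rle_lt_trans _ (Rabs (F1 z) * e2)). apply Rmult_le_compat_l; lra.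
  apply Rmult_lt_compat_r; [lra|unfold A; lra]. }
lra.
Qed.

Definition Phi (u : C -> C) (w : C) := dot (u w) (u w) * W (Cmod w).

Lemma W_cont x : 0 < x -> continuity_pt W x.
Proof. intros Hx. apply derivable_continuous_pt. exists (W x * om x). apply is_derive_Reals, W_der, Hx. Qed.

Lemma Phi_cts (u u1 : C -> C) z :
  (forall w, Cmod w < 1 -> @is_derive C_AbsRing C_NormedModule u w (u1 w)) -> u (RtoC 0) = RtoC 0 -> Cmod z < 1 ->
  ctsC (Phi u) z.
Proof.
intros Hu H0 Hz. destruct (Req_dec (Cmod z) 0) as [Z|NZ].
- apply Cmod_eq_0 in Z. subst z.
  pose proof (Hu (RtoC 0) ltac:(rewrite Cmod_0; lra)) as Hd.
  destruct (cderiv_eps u (RtoC 0) (u1 (RtoC 0)) Hd 1 Rlt_0_1) as [d0 [Hd0 Hdd0]].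
  set (Cc := Cmod (u1 (RtoC 0)) + 1). assert (HC : 0 < Cc) by (unfold Cc; pose proof (Cmod_ge_0 (u1 (RtoC 0))); lra).
  intros eps Heps. set (K := Cc*Cc*exp (1/100) + 1).
  assert (HK : 0 < K) by (unfold K; pose proof (exp_pos (1/100)); nra).
  set (d := Rmin (Rmin d0 1) (exp (4 * ln (eps / K)))).
  exists d. split. { unfold d. apply Rmin_pos; [apply Rmin_pos; lra|apply exp_pos]. }
  intros w Hw. replace (w - RtoC 0)%C with w in Hw by ring.
  assert (Hw0 : Cmod w < d0) by (eapply Rlt_le_trans; [exact Hw|]; unfold d; eapply Rle_trans; [apply Rmin_l|apply Rmin_l]).
  assert (Hw1 : Cmod w < 1) by (eapply Rlt_le_trans; [exact Hw|]; unfold d; eapply Rle_trans; [apply Rmin_l|apply Rmin_r]).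
  assert (Hw2 : Cmod w < exp (4 * ln (eps / K))) by (eapply Rlt_le_trans; [exact Hw|]; unfold d; apply Rmin_r).
  unfold Phi. rewrite H0. replace (dot (RtoC 0) (RtoC 0)) with 0 by (unfold dot; simpl; ring).
  rewrite Rmult_0_l, Rminus_0_r.
  specialize (Hdd0 w Hw0). replace (RtoC 0 + w)%C with w in Hdd0 by ring. rewrite H0 in Hdd0.
  replace (u w - RtoC 0 - w * u1 (RtoC 0))%C with (u w - w * u1 (RtoC 0))%C in Hdd0 by ring.
  assert (Hub : Cmod (u w) <= Cc * Cmod w).
  { replace (u w) with ((u w - w * u1 (RtoC 0)) + w * u1 (RtoC 0))%C by ring.
    eapply Rle_trans; [apply Cmod_triangle|]. rewrite Cmod_mult. unfold Cc. pose proof (Cmod_ge_0 w). nra. }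
  rewrite dot_Cmod. pose proof (W_pos (Cmod w)). pose proof (Cmod_ge_0 (u w)).
  rewrite Rabs_pos_eq by (apply Rmult_le_pos; [apply pow2_ge_0|lra]).
  destruct (Req_dec (Cmod w) 0) as [Zw|NZw].
  + apply Cmod_eq_0 in Zw. rewrite Zw, H0, Cmod_0. simpl. lra.
  + assert (Hr : 0 < Cmod w) by (pose proof (Cmod_ge_0 w); lra).
    set (r := Cmod w) in *.
    assert (E1 : r * r * W r = exp (ln r / 4 + 1/100 * (r*r))).
    { unfold W, dd. replace (r * r) with (exp (ln r) * exp (ln r)) at 1 by (rewrite exp_ln; auto).
      rewrite <- !exp_plus. f_equal. field. }
    assert (E2 : exp (ln r / 4 + 1/100 * (r*r)) <= exp (ln r / 4) * exp (1/100)).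
    { rewrite <- exp_plus. apply Rlt_le, exp_increasing. nra. }
    assert (E3 : exp (ln r / 4) < eps / K).
    { rewrite <- (exp_ln (eps / K)) by (apply Rdiv_lt_0_compat; lra).
      apply exp_increasing. apply ln_increasing in Hw2; [|exact Hr]. rewrite ln_exp in Hw2. lra. }
    assert (E4 : Cmod (u w) ^ 2 * W r <= Cc * Cc * (r * r * W r)).
    { replace (Cc * Cc * (r * r * W r)) with ((Cc * r)^2 * W r) by ring.
      apply Rmult_le_compat_r; [lra|]. apply pow_incr. lra. }
    rewrite E1 in E4. pose proof (exp_pos (1/100)). pose proof (exp_pos (ln r / 4)).
    assert (E5 : Cc * Cc * exp (ln r / 4 + 1 / 100 * (r * r)) <= Cc*Cc*exp(1/100) * exp (ln r / 4)).
    { replace (Cc*Cc*exp(1/100) * exp (ln r / 4)) with (Cc*Cc*(exp (ln r / 4) * exp (1/100))) by ring.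
      apply Rmult_le_compat_l; [nra|exact E2]. }
    assert (E6 : Cc*Cc*exp(1/100) * exp (ln r / 4) < K * (eps / K)).
    { apply (Rle_lt_trans _ (K * exp (ln r / 4))). apply Rmult_le_compat_r; [lra|unfold K; lra].
      apply Rmult_lt_compat_l; lra. }
    replace (K * (eps / K)) with eps in E6 by (field; lra). lra.
- apply (ctsC_ext (fun w => (fun x => x^2) (Cmod (u w)) * (fun x => W x) (Cmod w))).
  { intros w. unfold Phi. rewrite dot_Cmod. reflexivity. }
  apply ctsC_mult.
  + apply (ctsC_comp (fun x => x^2) (fun w => Cmod (u w))).
    * apply derivable_continuous_pt. exists (2 * Cmod (u z) ^1). apply derivable_pt_lim_pow.
    * eapply ctsC_u_mod. apply Hu, Hz.
  + apply (ctsC_comp W Cmod). apply W_cont. pose proof (Cmod_ge_0 z); lra. apply ctsC_Cmod.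
Qed.

Lemma exp_pow_n x n : exp (INR n * x) = exp x ^ n.
Proof. induction n. simpl. rewrite Rmult_0_l, exp_0. reflexivity.
rewrite S_INR. replace ((INR n + 1) * x) with (INR n * x + x) by ring. rewrite exp_plus, IHn. simpl. ring. Qed.

Lemma exp1_bound : 26/10 <= exp 1.
Proof.
replace 1 with (INR 16 * (1/16)) by (simpl; field). rewrite exp_pow_n.
assert (H : 1 + 1/16 < exp (1/16)) by (apply exp_ineq1; lra).
apply (Rle_trans _ ((17/16)^16)).
{ replace ((17/16)^16) with (48661191875666868481/18446744073709551616) by (simpl; field). lra. }
apply pow_incr. lra.
Qed.

Lemma pol0 t : pol 0 t = RtoC 0.
Proof. unfold pol. apply injective_projections; simpl; ring. Qed.

Lemma in_disk_pol r t : 0 <= r < 1 -> Cmod (pol r t) < 1.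
Proof. intros. rewrite Cmod_pol, Rabs_pos_eq; lra. Qed.

Lemma theta_d1 (u u1 : C -> C) r t : 0 <= r < 1 ->
  (forall w, Cmod w < 1 -> @is_derive C_AbsRing C_NormedModule u w (u1 w)) ->
  is_derive (fun s => dot (u (pol r s)) (u (pol r s))) t (2 * dot (u (pol r t)) (Ci * pol r t * u1 (pol r t))%C).
Proof.
intros Hr Hu.
assert (H : cpd (fun s => u (pol r s)) t (Ci * pol r t * u1 (pol r t))%C).
{ apply cpd_comp. apply Hu, in_disk_pol, Hr. apply cpd_pol_t. }
pose proof (dot_deriv _ _ t _ _ H H) as H2. simpl in H2.
replace (2 * dot (u (pol r t)) (Ci * pol r t * u1 (pol r t))%C) with
  (dot (Ci * pol r t * u1 (pol r t))%C (u (pol r t)) + dot (u (pol r t)) (Ci * pol r t * u1 (pol r t))%C)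
  by (rewrite dot_sym; ring). exact H2.
Qed.

Lemma theta_d2 (u u1 u2 : C -> C) r t : 0 <= r < 1 ->
  (forall w, Cmod w < 1 -> @is_derive C_AbsRing C_NormedModule u w (u1 w)) ->
  (forall w, Cmod w < 1 -> @is_derive C_AbsRing C_NormedModule u1 w (u2 w)) ->
  is_derive (fun s => 2 * dot (u (pol r s)) (Ci * pol r s * u1 (pol r s))%C) t
   (2 * (dot (Ci * pol r t * u1 (pol r t))%C (Ci * pol r t * u1 (pol r t))%C +
         dot (u (pol r t)) (Ci * (Ci * pol r t) * u1 (pol r t) + Ci * pol r t * (Ci * pol r t * u2 (pol r t)))%C)).
Proof.
intros Hr Hu Hu1.
assert (H : cpd (fun s => u (pol r s)) t (Ci * pol r t * u1 (pol r t))%C).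
{ apply cpd_comp. apply Hu, in_disk_pol, Hr. apply cpd_pol_t. }
assert (H1 : cpd (fun s => u1 (pol r s)) t (Ci * pol r t * u2 (pol r t))%C).
{ apply cpd_comp. apply Hu1, in_disk_pol, Hr. apply cpd_pol_t. }
pose proof (cpd_mult _ _ t _ _ (cpd_Cipol_t r t) H1) as H2. simpl in H2.
pose proof (dot_deriv _ _ t _ _ H H2) as H3.
apply (is_derive_scal _ _ 2) in H3. exact H3.
Qed.

Lemma rad_d1 (u u1 : C -> C) r t : 0 <= r < 1 ->
  (forall w, Cmod w < 1 -> @is_derive C_AbsRing C_NormedModule u w (u1 w)) ->
  is_derive (fun s => dot (u (pol s t)) (u (pol s t))) r (2 * dot (u (pol r t)) (pol 1 t * u1 (pol r t))%C).
Proof.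
intros Hr Hu.
assert (H : cpd (fun s => u (pol s t)) r (pol 1 t * u1 (pol r t))%C).
{ apply cpd_comp. apply Hu, in_disk_pol, Hr. apply cpd_pol_r. }
pose proof (dot_deriv _ _ r _ _ H H) as H2.
replace (2 * dot (u (pol r t)) (pol 1 t * u1 (pol r t))%C) with
  (dot (pol 1 t * u1 (pol r t))%C (u (pol r t)) + dot (u (pol r t)) (pol 1 t * u1 (pol r t))%C)
  by (rewrite dot_sym; ring). exact H2.
Qed.

Lemma rad_d2 (u u1 u2 : C -> C) r t : 0 <= r < 1 ->
  (forall w, Cmod w < 1 -> @is_derive C_AbsRing C_NormedModule u w (u1 w)) ->
  (forall w, Cmod w < 1 -> @is_derive C_AbsRing C_NormedModule u1 w (u2 w)) ->
  is_derive (fun s => 2 * dot (u (pol s t)) (pol 1 t * u1 (pol s t))%C) r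
   (2 * (dot (pol 1 t * u1 (pol r t))%C (pol 1 t * u1 (pol r t))%C +
         dot (u (pol r t)) (pol 1 t * (pol 1 t * u2 (pol r t)))%C)).
Proof.
intros Hr Hu Hu1.
assert (H : cpd (fun s => u (pol s t)) r (pol 1 t * u1 (pol r t))%C).
{ apply cpd_comp. apply Hu, in_disk_pol, Hr. apply cpd_pol_r. }
assert (H1 : cpd (fun s => u1 (pol s t)) r (pol 1 t * u2 (pol r t))%C).
{ apply cpd_comp. apply Hu1, in_disk_pol, Hr. apply cpd_pol_r. }
pose proof (cpd_scal (pol 1 t) _ r _ H1) as H2.
pose proof (dot_deriv _ _ r _ _ H H2) as H3.
apply (is_derive_scal _ _ 2) in H3. exact H3.
Qed.

Lemma main_bound (u u1 u2 : C -> C) (a1 a2 : R) :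
  0 < a2 -> exp 2 <= a1 - a2 ->
  (forall w, Cmod w < 1 -> @is_derive C_AbsRing C_NormedModule u w (u1 w)) ->
  (forall w, Cmod w < 1 -> @is_derive C_AbsRing C_NormedModule u1 w (u2 w)) ->
  u (RtoC 0) = RtoC 0 ->
  (forall w, Cmod w < 1 -> Cmod (RtoC a1 * w * u1 w + RtoC a2 * (w*w) * u2 w)%C < exp 1) ->
  forall z, Cmod z < 1 -> dot (u z) (u z) < 1/5.
Proof.
intros Ha2 Ha Hu Hu1 H0 Hq z Hz.
destruct (Req_dec (Cmod z) 0) as [Z|NZ].
{ apply Cmod_eq_0 in Z. rewrite Z, H0. unfold dot; simpl; lra. }
set (r := Cmod z) in *.
assert (Hr : 0 < r) by (pose proof (Cmod_ge_0 z); unfold r in *; lra).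
set (G := fun x y => Phi u (pol (clamp r x) y)).
destruct (evt2 G 0 r 0 (2*PI)) as [r1 [t1 [Hr1 [Ht1 Hmax]]]].
{ lra. } { pose proof PI_RGT_0; lra. }
{ intros x y eps Heps. apply (cts2_of_ctsC (Phi u) r); [lra| |exact Heps].
  intros w Hw. apply (Phi_cts u u1); auto. lra. }
unfold G in Hmax. rewrite (clamp_id r r1 Hr1) in Hmax.
assert (Hmax' : forall x y, 0 <= x <= r -> 0 <= y <= 2*PI -> Phi u (pol x y) <= Phi u (pol r1 t1)).
{ intros x y Hx Hy. specialize (Hmax x y Hx Hy). rewrite clamp_id in Hmax by exact Hx. exact Hmax. }
clear Hmax.
destruct (polar_repr z) as [tz [Htz Ez]]. { fold r; lra. }
fold r in Ez.
assert (Hzle : Phi u z <= Phi u (pol r1 t1)) by (rewrite Ez; apply Hmax'; lra).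
assert (HPhiz : Phi u z = dot (u z) (u z) * W r) by reflexivity.
pose proof (W_pos r) as HWr. pose proof (dot_nonneg (u z)) as Hdz.
destruct (Rle_lt_dec (Phi u (pol r1 t1)) 0) as [Hle|Hgt].
{ assert (dot (u z) (u z) * W r <= 0) by lra.
  assert (dot (u z) (u z) <= 0).
  { destruct (Rle_lt_dec (dot (u z) (u z)) 0); auto. nra. }
  lra. }
set (z1 := pol r1 t1) in *.
assert (Hr1p : 0 < r1).
{ destruct (Req_dec r1 0) as [E|E]; [|lra]. exfalso. unfold z1 in Hgt. rewrite E, pol0 in Hgt.
  unfold Phi in Hgt. rewrite H0 in Hgt. unfold dot in Hgt; simpl in Hgt. lra. }
assert (Hr1lt : r1 < 1) by (unfold r in *; lra).
assert (Hz1 : Cmod z1 = r1) by (unfold z1; rewrite Cmod_pol, Rabs_pos_eq; lra).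
set (N1 := dot (u z1) (u z1)).
assert (HPhi1 : Phi u z1 = N1 * W r1) by (unfold Phi, N1; rewrite Hz1; reflexivity).
pose proof (W_pos r1) as HWr1.
assert (HN1 : 0 < N1).
{ pose proof (dot_nonneg (u z1)). fold N1 in H. destruct (Req_dec N1 0) as [E|E]; [|lra].
  rewrite HPhi1, E in Hgt. lra. }
set (U := u z1). set (V1 := u1 z1). set (V2 := u2 z1).
assert (Htheta : dot U (Ci * z1 * V1)%C = 0 /\
   dot (Ci * z1 * V1)%C (Ci * z1 * V1)%C + dot U (Ci * (Ci * z1) * V1 + Ci * z1 * (Ci * z1 * V2))%C <= 0).
{ assert (Hr1' : 0 <= r1 < 1) by lra.
  pose proof (max_second (fun s => dot (u (pol r1 s)) (u (pol r1 s)))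
     (fun s => 2 * dot (u (pol r1 s)) (Ci * pol r1 s * u1 (pol r1 s))%C) t1 _ 1 Rlt_0_1
     (fun t _ => theta_d1 u u1 r1 t Hr1' Hu) (theta_d2 u u1 u2 r1 t1 Hr1' Hu Hu1)) as HM.
  destruct HM as [HM1 HM2].
  - intros t Ht.
    assert (Hrep : exists t', 0 <= t' <= 2*PI /\ pol r1 t = pol r1 t').
    { pose proof PI2_1. apply Rabs_def2 in Ht.
      destruct (Rle_lt_dec 0 t) as [H1|H1].
      - destruct (Rle_lt_dec t (2*PI)) as [H2|H2].
        + exists t; split; [lra|reflexivity].
        + exists (t - 2*PI); split; [lra|symmetry; apply pol_m2PI].
      - exists (t + 2*PI); split; [lra|symmetry; apply pol_2PI]. }
    destruct Hrep as [t' [Ht' Et']].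
    assert (Hc : Phi u (pol r1 t') <= Phi u z1) by (apply Hmax'; lra).
    unfold Phi in Hc. rewrite Cmod_pol, Rabs_pos_eq in Hc by lra. rewrite Hz1 in Hc.
    rewrite Et'. fold z1 N1 in Hc |- *. 
    apply (Rmult_le_reg_r (W r1)); auto.
  - split; fold z1 U V1 V2 in HM1, HM2; lra. }
destruct Htheta as [Hth1 Hth2].
set (X := dot U (z1 * V1)%C). set (Y := dot U (z1 * z1 * V2)%C). set (P := dot (z1 * V1)%C (z1 * V1)%C).
assert (HXP : X * X = N1 * P).
{ pose proof (dot_rot U (z1 * V1)%C) as R.
  replace (dot U (Ci * (z1 * V1))%C) with (dot U (Ci * z1 * V1)%C) in R
    by (unfold dot, Re, Im, Ci; simpl; ring).
  rewrite Hth1 in R. unfold X, N1, P. fold U. simpl in R. lra. }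
assert (HT : P - X - Y <= 0).
{ replace (dot (Ci * z1 * V1)%C (Ci * z1 * V1)%C) with P in Hth2 by (unfold P, dot, Re, Im, Ci; simpl; ring).
  replace (dot U (Ci * (Ci * z1) * V1 + Ci * z1 * (Ci * z1 * V2))%C) with (- X - Y) in Hth2
    by (unfold X, Y, dot, Re, Im, Ci; simpl; ring).
  lra. }
set (q := (RtoC a1 * z1 * V1 + RtoC a2 * (z1 * z1) * V2)%C).
assert (Hqz : Cmod q < exp 1) by (apply Hq; rewrite Hz1; lra).
assert (HdUq : dot U q = a1 * X + a2 * Y) by (unfold q, X, Y, dot, Re, Im, RtoC; simpl; ring).
assert (HQ : (a1 * X + a2 * Y)^2 <= N1 * dot q q) by (rewrite <- HdUq; apply dot_cs).
assert (HQ2 : dot q q < exp 1 * exp 1).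
{ rewrite dot_Cmod. pose proof (Cmod_ge_0 q). simpl. nra. }
assert (HE : exp 1 * exp 1 <= a1 - a2) by (rewrite <- exp_plus; replace (1+1) with 2 by ring; exact Ha).
pose proof exp1_bound as He1.
set (zeta := pol 1 t1).
assert (Hz1s : z1 = (RtoC r1 * zeta)%C) by (unfold z1, zeta; apply pol_scal).
set (Xz := dot U (zeta * V1)%C). set (Pz := dot (zeta * V1)%C (zeta * V1)%C).
set (Yz := dot U (zeta * (zeta * V2))%C).
assert (EX : X = r1 * Xz) by (unfold X, Xz; rewrite Hz1s; unfold dot, Re, Im, RtoC; simpl; ring).
assert (EP : P = r1 * r1 * Pz) by (unfold P, Pz; rewrite Hz1s; unfold dot, Re, Im, RtoC; simpl; ring).
assert (EY : Y = r1 * r1 * Yz) by (unfold Y, Yz; rewrite Hz1s; unfold dot, Re, Im, RtoC; simpl; ring).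
set (A := fun s => dot (u (pol s t1)) (u (pol s t1))).
set (A' := fun s => 2 * dot (u (pol s t1)) (pol 1 t1 * u1 (pol s t1))%C).
set (g := fun s => A s * W s).
set (g' := fun s => A' s * W s + A s * (W s * om s)).
assert (Hg : forall s, 0 < s < 1 -> is_derive g s (g' s)).
{ intros s Hs. unfold g, g'. apply (is_derive_mult A W).
  - apply (rad_d1 u u1 s t1); [lra|exact Hu].
  - apply W_der; lra.
  - intros; apply Rmult_comm. }
assert (HA1 : A r1 = N1) by reflexivity.
assert (HA'1 : A' r1 = 2 * Xz) by reflexivity.
assert (Hgle : forall s, 0 < s <= r -> g s <= g r1).
{ intros s Hs. unfold g. 
  assert (Hc : Phi u (pol s t1) <= Phi u z1) by (apply Hmax'; lra).
  unfold Phi in Hc. rewrite Cmod_pol, Rabs_pos_eq in Hc by lra. rewrite Hz1 in Hc. exact Hc. }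
destruct (Rle_lt_dec r r1) as [Hb|Hi].
-
  assert (Er : r1 = r) by lra.
  assert (Hg'0 : 0 <= g' r1).
  { apply (left_max g r1 (g' r1) r1 Hr1p (Hg r1 (conj Hr1p Hr1lt))).
    intros h Hh. apply Hgle. lra. }
  unfold g' in Hg'0. rewrite HA1, HA'1 in Hg'0.
  assert (Hg'1 : 0 <= 2*X/r1 + N1*om r1).
  { rewrite EX. replace (2 * (r1 * Xz) / r1) with (2*Xz) by (field; lra).
    apply (Rmult_le_reg_l (W r1)); [auto|]. rewrite Rmult_0_r. nra. }
  assert (HN : N1 < 1/5).
  { apply (alg_boundary N1 X Y P (dot q q) (exp 1) r1 a1 a2); auto; lra. }
  assert (dot (u z) (u z) * W r <= N1 * W r).
  { replace (N1 * W r) with (Phi u z1) by (rewrite HPhi1, Er; reflexivity). rewrite <- HPhiz. exact Hzle. }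
  assert (dot (u z) (u z) <= N1) by (apply (Rmult_le_reg_r (W r)); auto).
  lra.
-
  exfalso.
  set (del := Rmin r1 (r - r1)).
  assert (Hdel : 0 < del) by (unfold del; apply Rmin_pos; lra).
  assert (Hd2 : is_derive g' r1 (2 * (Pz + Yz) * W r1 + 2 * Xz * (W r1 * om r1) +
              (2 * Xz * (W r1 * om r1) + N1 * (W r1 * (om r1 * om r1 + om' r1))))).
  { unfold g'. apply (is_derive_plus (fun s => A' s * W s) (fun s => A s * (W s * om s))).
    - apply (is_derive_mult A' W).
      + apply (rad_d2 u u1 u2 r1 t1); [lra|exact Hu|exact Hu1].
      + apply W_der; lra.
      + intros; apply Rmult_comm.
    - apply (is_derive_mult A (fun s => W s * om s)).
      + apply (rad_d1 u u1 r1 t1); [lra|exact Hu].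
      + apply Wom_der; lra.
      + intros; apply Rmult_comm. }
  destruct (max_second g g' r1 (2 * (Pz + Yz) * W r1 + 2 * Xz * (W r1 * om r1) +
              (2 * Xz * (W r1 * om r1) + N1 * (W r1 * (om r1 * om r1 + om' r1)))) del Hdel) as [Z1 Z2].
  + intros s Hs. apply Hg. unfold del in Hs. apply Rabs_def2 in Hs.
    pose proof (Rmin_l r1 (r - r1)). pose proof (Rmin_r r1 (r - r1)). lra.
  + exact Hd2.
  + intros s Hs. apply Hgle. unfold del in Hs. apply Rabs_def2 in Hs.
    pose proof (Rmin_l r1 (r - r1)). pose proof (Rmin_r r1 (r - r1)). lra.
  + unfold g' in Z1. rewrite HA1, HA'1 in Z1.
    apply (alg_interior N1 X Y P r1); auto.
    * rewrite EX. replace (2 * (r1 * Xz) / r1) with (2*Xz) by (field; lra).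
      apply (Rmult_eq_reg_l (W r1)); [|lra]. rewrite Rmult_0_r. lra.
    * rewrite EX, EP, EY.
      replace (2 * (r1 * r1 * Pz + r1 * r1 * Yz) / (r1 * r1)) with (2 * (Pz + Yz)) by (field; lra).
      replace (2 * (r1 * Xz) / r1) with (2*Xz) by (field; lra).
      apply (Rmult_le_reg_l (W r1)); [auto|]. rewrite Rmult_0_r. nra.
Qed.

Lemma cexp_comp a b : cexp (a, b) = (exp a * cos b, exp a * sin b).
Proof. unfold cexp, Re, Im; simpl. apply injective_projections; simpl; ring. Qed.

Lemma cexp_plus x y : cexp (x + y)%C = (cexp x * cexp y)%C.
Proof.
destruct x as [a b]; destruct y as [c d]. unfold Cplus. simpl. rewrite !cexp_comp.
rewrite exp_plus, cos_plus, sin_plus. apply injective_projections; simpl; ring.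
Qed.

Lemma Cmod_cexp x : Cmod (cexp x) = exp (Re x).
Proof.
destruct x as [a b]. rewrite cexp_comp. unfold Cmod; simpl.
replace (exp a * cos b * (exp a * cos b * 1) + exp a * sin b * (exp a * sin b * 1))
  with (exp a * exp a * (Rsqr (sin b) + Rsqr (cos b))) by (unfold Rsqr; ring).
rewrite sin2_cos2, Rmult_1_r. apply sqrt_square. pose proof (exp_pos a); lra.
Qed.

Lemma cexp_d0 : forall eta, 0 < eta -> exists del, 0 < del /\ forall k, Cmod k < del ->
  Cmod (cexp k - RtoC 1 - k)%C <= eta * Cmod k.
Proof.
intros eta Heta. set (e := Rmin (eta/5) (1/2)).
assert (He : 0 < e) by (unfold e; apply Rmin_pos; lra).
assert (He5 : 5 * e <= eta) by (unfold e; pose proof (Rmin_l (eta/5) (1/2)); lra).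
assert (He2 : e <= 1/2) by (unfold e; apply Rmin_r).
pose proof (derivable_pt_lim_exp 0) as Hexp. rewrite exp_0 in Hexp.
pose proof (derivable_pt_lim_cos 0) as Hcos. rewrite sin_0 in Hcos.
pose proof (derivable_pt_lim_sin 0) as Hsin. rewrite cos_0 in Hsin.
destruct (eps_of_dpl _ _ _ Hexp e He) as [d1 [Hd1 H1]].
destruct (eps_of_dpl _ _ _ Hcos e He) as [d2 [Hd2 H2]].
destruct (eps_of_dpl _ _ _ Hsin e He) as [d3 [Hd3 H3]].
exists (Rmin (Rmin d1 d2) (Rmin d3 (e/2))). split.
{ repeat apply Rmin_pos; lra. }
intros [a b] Hk.
assert (Ha : Rabs a <= Cmod (a,b)) by apply (Cmod_Re_le (a,b)).
assert (Hb : Rabs b <= Cmod (a,b)) by apply (Cmod_Im_le (a,b)).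
set (m := Cmod (a,b)) in *.
assert (Hm1 : m < d1) by (eapply Rlt_le_trans; [exact Hk|]; eapply Rle_trans; apply Rmin_l).
assert (Hm2 : m < d2) by (eapply Rlt_le_trans; [exact Hk|]; eapply Rle_trans; [apply Rmin_l|apply Rmin_r]).
assert (Hm3 : m < d3) by (eapply Rlt_le_trans; [exact Hk|]; eapply Rle_trans; [apply Rmin_r|apply Rmin_l]).
assert (Hm4 : m < e/2) by (eapply Rlt_le_trans; [exact Hk|]; eapply Rle_trans; [apply Rmin_r|apply Rmin_r]).
specialize (H1 a ltac:(lra)). specialize (H2 b ltac:(lra)). specialize (H3 b ltac:(lra)).
assert (H1' : Rabs (exp a - 1 - a) <= e * Rabs a).
{ replace (exp a - 1 - a) with (exp (0+a) - exp 0 - a*1) by (rewrite Rplus_0_l, exp_0; ring). exact H1. }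
assert (H2' : Rabs (cos b - 1) <= e * Rabs b).
{ replace (cos b - 1) with (cos (0+b) - cos 0 - b * (- 0)) by (rewrite Rplus_0_l, cos_0; ring). exact H2. }
assert (H3' : Rabs (sin b - b) <= e * Rabs b).
{ replace (sin b - b) with (sin (0+b) - sin 0 - b * 1) by (rewrite Rplus_0_l, sin_0; ring). exact H3. }
clear H1 H2 H3.
assert (Hsb : Rabs (sin b) <= Rabs b) by (pose proof (sin_lip b 0); rewrite sin_0, !Rminus_0_r in H; exact H).
eapply Rle_trans; [apply Cmod_le_ReIm|].
rewrite cexp_comp. unfold Re, Im; simpl.
replace (exp a * cos b + - 1 + - a) with ((exp a - 1 - a) + exp a * (cos b - 1)) by ring.
replace (exp a * sin b + - 0 + - b) with ((exp a - 1) * sin b + (sin b - b)) by ring.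
assert (He1 : Rabs (exp a - 1) <= 2 * Rabs a).
{ replace (exp a - 1) with ((exp a - 1 - a) + a) by ring. eapply Rle_trans; [apply Rabs_triang|].
  pose proof (Rabs_pos a). nra. }
assert (Hea : exp a <= 2).
{ pose proof (Rabs_pos a).
  assert (exp a - 1 <= 2 * Rabs a) by (eapply Rle_trans; [apply Rle_abs|exact He1]). lra. }
pose proof (Rabs_triang (exp a - 1 - a) (exp a * (cos b - 1))).
pose proof (Rabs_triang ((exp a - 1) * sin b) (sin b - b)).
rewrite Rabs_mult in H, H0.
rewrite (Rabs_pos_eq (exp a)) in H by (pose proof (exp_pos a); lra).
pose proof (Rabs_pos (cos b - 1)). pose proof (Rabs_pos (sin b)). pose proof (Rabs_pos (exp a - 1)).
pose proof (exp_pos a). pose proof (Rabs_pos a). pose proof (Rabs_pos b).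
assert (Rabs (exp a - 1) * Rabs (sin b) <= e * m).
{ apply (Rle_trans _ (2 * Rabs a * Rabs b)). apply Rmult_le_compat; lra. nra. }
assert (exp a * Rabs (cos b - 1) <= 2 * (e * m)).
{ apply Rmult_le_compat; nra. }
assert (e * Rabs a <= e * m) by (apply Rmult_le_compat_l; lra).
assert (e * Rabs b <= e * m) by (apply Rmult_le_compat_l; lra).
assert (0 <= m) by (pose proof (Rabs_pos a); lra).
assert (5 * e * m <= eta * m) by (apply Rmult_le_compat_r; lra).
replace (exp a * cos b + - (1) + - a) with ((exp a - 1 - a) + exp a * (cos b - 1)) by ring.
lra.
Qed.

Lemma zyz (z y : C) : (z + (y - z))%C = y.
Proof. ring. Qed.

Lemma cderiv_of_eps (f : C -> C) z l :
  (forall eps, 0<eps -> exists del, 0<del /\ forall h, Cmod h < del -> Cmod (f (z+h) - f z - h*l)%C <= eps * Cmod h) ->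
  @is_derive C_AbsRing C_NormedModule f z l.
Proof.
intros H. unfold is_derive, filterdiff. split.
- apply is_linear_scal_l.
- intros x Hx. pose proof (@is_filter_lim_locally_unique C_AbsRing (AbsRing_NormedModule C_AbsRing) z x Hx) as E. subst x.
  intros eps. destruct (H eps (cond_pos eps)) as [d [Hd Hdd]].
  exists (mkposreal d Hd). intros y Hy. change (Cmod (minus y z) < d) in Hy.
  assert (Hm : minus y z = (y - z)%C) by reflexivity.
  rewrite Hm in Hy. specialize (Hdd (y - z)%C Hy). rewrite (zyz z y) in Hdd.
  change (Cmod (minus (minus (f y) (f z)) (scal (minus y z) l)) <= eps * Cmod (minus y z)).
  rewrite Hm. replace (minus (minus (f y) (f z)) (scal (y - z)%C l)) with (f y - f z - (y - z) * l)%C.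
  exact Hdd. reflexivity.
Qed.

Definition Lg (v : C) : C := (ln (dot v v) / 2, atan (Im v / Re v)).

Lemma cexp_Lg v : 0 < Re v -> cexp (Lg v) = v.
Proof.
intros Hx. destruct v as [x y]. unfold Lg. rewrite cexp_comp. unfold Re, Im, dot in *; simpl in *.
set (s := x * x + y * y).
assert (Hs : 0 < s) by (unfold s; nra).
set (E := exp (ln s / 2)).
assert (HE : 0 < E) by apply exp_pos.
assert (HEE : E * E = s) by (unfold E; rewrite <- exp_plus; replace (ln s / 2 + ln s / 2) with (ln s) by field; apply exp_ln; exact Hs).
rewrite cos_atan, sin_atan.
assert (Hq : sqrt (1 + (y / x)²) = E / x).
{ replace (1 + (y / x)²) with (Rsqr (E / x)).
  { apply sqrt_Rsqr. apply Rlt_le, Rdiv_lt_0_compat; lra. }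
  unfold Rsqr. replace (E / x * (E / x)) with (E * E / (x * x)) by (field; lra).
  rewrite HEE. unfold s. field. lra. }
rewrite Hq. apply injective_projections; simpl; field; lra.
Qed.

Lemma Lg_1 : Lg (RtoC 1) = RtoC 0.
Proof.
unfold Lg, dot, Re, Im, RtoC; simpl. replace (1 * 1 + 0 * 0) with 1 by ring. rewrite ln_1.
replace (0 / 1) with 0 by field. rewrite atan_0. apply injective_projections; simpl; field.
Qed.

Lemma atan_le t : Rabs (atan t) <= Rabs t.
Proof.
pose proof (lip_aux atan (fun x => / (1 + x^2)) t 0) as H. rewrite atan_0, !Rminus_0_r in H. apply H.
- intros x. apply is_derive_Reals, derivable_pt_lim_atan.
- intros x. rewrite Rabs_pos_eq. 2:{ apply Rlt_le, Rinv_0_lt_compat. nra. }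
  rewrite <- Rinv_1. apply Rinv_le_contravar; [lra|]. nra.
Qed.

Lemma exp17 : 442/100 <= exp (17/10).
Proof.
replace (17/10) with (1 + 7/10) by field. rewrite exp_plus.
pose proof exp1_bound. pose proof (exp_ineq1 (7/10) ltac:(lra)).
pose proof (exp_pos (7/10)). nra.
Qed.

Lemma Lg_small v : (Re v - 1)^2 + (Im v)^2 < 1/5 -> Cmod (Lg v) < 1.
Proof.
intros H. destruct v as [x y]. unfold Re, Im in H; simpl in H.
assert (Hy2 : 0 <= y^2) by nra.
assert (Hx : 11/20 < x).
{ destruct (Rle_lt_dec x (11/20)) as [Hl|Hl]; auto. exfalso.
  assert (9/20 <= 1 - x) by lra. assert ((x-1)^2 >= (9/20)^2) by nra. lra. }
assert (Hy : y * y < x * x / 4).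
{ assert (0 <= (x - 4/5)^2) by apply pow2_ge_0.
  assert (E1 : (x-1)^2 = x*x - 2*x + 1) by ring. assert (E2 : (x-4/5)^2 = x*x - 8/5*x + 16/25) by field.
  assert (E3 : y^2 = y*y) by ring. lra. }
unfold Lg, dot, Re, Im; simpl.
set (s := x * x + y * y).
assert (Hs1 : 3025/10000 <= s) by (unfold s; nra).
assert (Hs2 : s <= 21/10) by (unfold s; nra).
pose proof exp17 as E17.
assert (Hl1 : - (17/10) <= ln s).
{ destruct (Rle_lt_dec (-(17/10)) (ln s)) as [|Hl]; auto. exfalso.
  apply exp_increasing in Hl. rewrite exp_ln in Hl by lra.
  assert (exp (-(17/10)) * exp (17/10) = 1) by (rewrite <- exp_plus; replace (-(17/10) + 17/10) with 0 by ring; apply exp_0).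
  nra. }
assert (Hl2 : ln s <= 17/10).
{ rewrite <- (ln_exp (17/10)). destruct (Req_dec s (exp (17/10))) as [E|E]. rewrite E; lra.
  left. apply ln_increasing; lra. }
assert (Ha : (atan (y / x))^2 <= (y/x)^2).
{ pose proof (atan_le (y/x)). pose proof (Rabs_pos (atan (y/x))).
  rewrite <- (Rsqr_abs (atan (y/x))) || idtac.
  replace ((atan (y/x))^2) with (Rabs (atan (y/x)) * Rabs (atan (y/x))) by (rewrite <- Rabs_mult, Rabs_pos_eq; [ring|nra]).
  replace ((y/x)^2) with (Rabs (y/x) * Rabs (y/x)) by (rewrite <- Rabs_mult, Rabs_pos_eq; [ring|nra]).
  apply Rmult_le_compat; auto. }
assert (Hyx : (y/x)^2 < 1/4).
{ replace ((y/x)^2) with (y*y/(x*x)) by (field; lra).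
  apply (Rmult_lt_reg_r (x*x)); [nra|]. unfold Rdiv. rewrite Rmult_assoc, Rinv_l by nra. lra. }
unfold Cmod; simpl. apply (Rlt_le_trans _ (sqrt 1)); [apply sqrt_lt_1_alt|rewrite sqrt_1; lra]. split.
- apply Rplus_le_le_0_compat; rewrite Rmult_1_r; apply Rle_0_sqr.
- assert ((ln s / 2) * (ln s / 2) <= 7225/10000) by nra.
  simpl in Ha. lra.
Qed.

Lemma inv_deriv (p w : C -> C) z l R :
  0 < R -> (forall h, Cmod h < R -> cexp (w (z+h)%C) = p (z+h)%C) ->
  @is_derive C_AbsRing C_NormedModule p z l -> p z <> RtoC 0 ->
  (forall eps, 0 < eps -> exists del, 0 < del /\ forall h, Cmod h < del -> Cmod (w (z+h) - w z)%C < eps) ->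
  @is_derive C_AbsRing C_NormedModule w z (l / p z)%C.
Proof.
intros HR Hexp Hp HP0 Hw. apply cderiv_of_eps. intros eta Heta.
set (P := p z) in *.
assert (HP : 0 < Cmod P) by (apply Cmod_gt_0; exact HP0).
set (M := Cmod l + 1). assert (HM : 0 < M) by (unfold M; pose proof (Cmod_ge_0 l); lra).
set (e1 := Rmin (1/2) (eta * Cmod P / (4*M))).
set (e2 := Rmin 1 (eta * Cmod P / 2)).
assert (He1 : 0 < e1) by (unfold e1; apply Rmin_pos; [lra|]; apply Rdiv_lt_0_compat; nra).
assert (He2 : 0 < e2) by (unfold e2; apply Rmin_pos; [lra|]; apply Rdiv_lt_0_compat; nra).
assert (He1h : e1 <= 1/2) by apply Rmin_l.
assert (He1b : e1 * (4 * M) <= eta * Cmod P).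
{ unfold e1. apply (Rle_trans _ (eta * Cmod P / (4 * M) * (4*M))).
  apply Rmult_le_compat_r; [lra|apply Rmin_r]. right; field; lra. }
assert (He2b : 2 * e2 <= eta * Cmod P) by (unfold e2; pose proof (Rmin_r 1 (eta * Cmod P / 2)); lra).
assert (He2h : e2 <= 1) by apply Rmin_l.
destruct (cexp_d0 e1 He1) as [d1 [Hd1 Hdd1]].
destruct (cderiv_eps p z l Hp e2 He2) as [d2 [Hd2 Hdd2]].
destruct (Hw d1 Hd1) as [d3 [Hd3 Hdd3]].
exists (Rmin R (Rmin d2 d3)). split; [repeat apply Rmin_pos; lra|].
intros h Hh.
assert (HhR : Cmod h < R) by (eapply Rlt_le_trans; [exact Hh|apply Rmin_l]).
assert (Hh2 : Cmod h < d2) by (eapply Rlt_le_trans; [exact Hh|]; eapply Rle_trans; [apply Rmin_r|apply Rmin_l]).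
assert (Hh3 : Cmod h < d3) by (eapply Rlt_le_trans; [exact Hh|]; eapply Rle_trans; [apply Rmin_r|apply Rmin_r]).
set (k := (w (z+h) - w z)%C).
assert (Hk : Cmod k < d1) by (apply Hdd3; exact Hh3).
specialize (Hdd1 k Hk). specialize (Hdd2 h Hh2).
assert (HwP : cexp (w z) = P).
{ pose proof (Hexp (RtoC 0) ltac:(rewrite Cmod_0; lra)) as E. rewrite Cplus_0_r in E. exact E. }
assert (Hpk : p (z + h)%C = (P * cexp k)%C).
{ rewrite <- (Hexp h HhR). replace (w (z+h)%C) with (w z + k)%C by (unfold k; ring).
  rewrite cexp_plus, HwP. reflexivity. }
set (D := (p (z+h) - P)%C) in *.
set (eps := (cexp k - RtoC 1 - k)%C) in *.
assert (EkD : (k - D / P)%C = (- eps)%C).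
{ unfold D, eps. rewrite Hpk. field. exact HP0. }
assert (HDP : Cmod (D / P)%C = Cmod D / Cmod P) by (apply Cmod_div; exact HP0).
assert (Hkb : Cmod k <= 2 * (Cmod D / Cmod P)).
{ pose proof (Cmod_triangle (k - D/P)%C (D/P)%C). rewrite EkD, Cmod_opp in H.
  replace (- eps + D / P)%C with k in H by (rewrite <- EkD; ring).
  rewrite HDP in H. pose proof (Cmod_ge_0 k).
  assert (e1 * Cmod k <= Cmod k / 2) by nra. lra. }
assert (HDb : Cmod D <= M * Cmod h).
{ replace D with ((D - h * l) + h * l)%C by ring. eapply Rle_trans; [apply Cmod_triangle|].
  rewrite Cmod_mult. unfold M. pose proof (Cmod_ge_0 h). pose proof (Cmod_ge_0 l).
  assert (Cmod (D - h*l)%C <= e2 * Cmod h) by (unfold D, P; exact Hdd2).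
  assert (e2 * Cmod h <= Cmod h) by nra. nra. }
replace (k - h * (l / P))%C with ((k - D / P) + (D - h * l) / P)%C.
2:{ field. exact HP0. }
eapply Rle_trans; [apply Cmod_triangle|]. rewrite EkD, Cmod_opp, Cmod_div by exact HP0.
pose proof (Cmod_ge_0 h). pose proof (Cmod_ge_0 D). pose proof (Cmod_ge_0 k).
set (X := Cmod h / Cmod P).
assert (HX0 : 0 <= X) by (unfold X; apply Rdiv_le_0_compat; lra).
assert (EX : Cmod P * X = Cmod h) by (unfold X; field; lra).
assert (HDX : Cmod D / Cmod P <= M * X).
{ unfold X, Rdiv. rewrite <- Rmult_assoc. apply Rmult_le_compat_r; [apply Rlt_le, Rinv_0_lt_compat; lra|lra]. }
assert (T1 : e1 * Cmod k <= eta / 2 * Cmod h).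
{ assert (e1 * Cmod k <= e1 * (2 * (M * X))) by (apply Rmult_le_compat_l; lra).
  assert (e1 * (4 * M) * X <= eta * Cmod P * X) by (apply Rmult_le_compat_r; lra).
  rewrite <- EX. nra. }
assert (HDh : Cmod (D - h*l)%C <= e2 * Cmod h) by (unfold D, P; exact Hdd2).
assert (T2 : Cmod (D - h * l)%C / Cmod P <= eta / 2 * Cmod h).
{ apply (Rle_trans _ (e2 * X)).
  - unfold X, Rdiv. rewrite <- Rmult_assoc. apply Rmult_le_compat_r; [apply Rlt_le, Rinv_0_lt_compat; lra|lra].
  - rewrite <- EX. assert (e2 * X <= eta * Cmod P / 2 * X) by (apply Rmult_le_compat_r; lra). lra. }
lra.
Qed.

Lemma u_cont (u : C -> C) l z : @is_derive C_AbsRing C_NormedModule u z l ->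
  forall eps, 0 < eps -> exists del, 0 < del /\ forall w, Cmod (w - z)%C < del -> Cmod (u w - u z)%C < eps.
Proof.
intros Hu eps Heps. destruct (cderiv_eps u z l Hu 1 Rlt_0_1) as [d0 [Hd0 Hdd0]].
set (M := Cmod l + 1). assert (HM : 0 < M) by (unfold M; pose proof (Cmod_ge_0 l); lra).
exists (Rmin d0 (eps / M)). split. { apply Rmin_pos; [lra|apply Rdiv_lt_0_compat; lra]. }
intros w Hw. set (h := (w - z)%C) in *.
assert (Hh1 : Cmod h < d0) by (eapply Rlt_le_trans; [exact Hw|apply Rmin_l]).
assert (Hh2 : Cmod h < eps / M) by (eapply Rlt_le_trans; [exact Hw|apply Rmin_r]).
specialize (Hdd0 h Hh1). replace (z + h)%C with w in Hdd0 by (unfold h; ring).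
replace (u w - u z)%C with ((u w - u z - h * l) + h * l)%C by ring.
eapply Rle_lt_trans; [apply Cmod_triangle|]. rewrite Cmod_mult.
apply (Rle_lt_trans _ (Cmod h * M)). { unfold M. pose proof (Cmod_ge_0 h). nra. }
apply (Rmult_lt_compat_r M) in Hh2; [|lra]. replace (eps / M * M) with eps in Hh2 by (field; lra). lra.
Qed.

Lemma ctsC_re (u : C -> C) l z : @is_derive C_AbsRing C_NormedModule u z l -> ctsC (fun w => Re (u w)) z.
Proof.
intros Hu eps Heps. destruct (u_cont u l z Hu eps Heps) as [d [Hd Hdd]]. exists d; split; auto.
intros w Hw. eapply Rle_lt_trans; [|apply (Hdd w Hw)].
replace (Re (u w) - Re (u z)) with (Re (u w - u z)%C) by (unfold Re; simpl; ring). apply Cmod_Re_le.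
Qed.
Lemma ctsC_im (u : C -> C) l z : @is_derive C_AbsRing C_NormedModule u z l -> ctsC (fun w => Im (u w)) z.
Proof.
intros Hu eps Heps. destruct (u_cont u l z Hu eps Heps) as [d [Hd Hdd]]. exists d; split; auto.
intros w Hw. eapply Rle_lt_trans; [|apply (Hdd w Hw)].
replace (Im (u w) - Im (u z)) with (Im (u w - u z)%C) by (unfold Im; simpl; ring). apply Cmod_Im_le.
Qed.

Lemma Lg_p_cont (p : C -> C) l z : @is_derive C_AbsRing C_NormedModule p z l -> 0 < Re (p z) ->
  forall eps, 0 < eps -> exists del, 0 < del /\ forall h, Cmod h < del -> Cmod (Lg (p (z+h)) - Lg (p z))%C < eps.
Proof.
intros Hp Hre eps Heps.
assert (Hd : 0 < dot (p z) (p z)) by (unfold dot; nra).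
assert (C1 : ctsC (fun w => ln (dot (p w) (p w)) / 2) z).
{ apply (ctsC_ext (fun w => (fun t => ln t / 2) ((fun t => t^2) (Cmod (p w))))).
  { intros w. rewrite dot_Cmod. reflexivity. }
  apply (ctsC_comp (fun t => ln t / 2)).
  - rewrite <- dot_Cmod. apply derivable_continuous_pt. exists (/ dot (p z) (p z) / 2).
    apply is_derive_Reals. auto_derive. lra. field. lra.
  - apply (ctsC_comp (fun t => t^2)).
    + apply derivable_continuous_pt. exists (2 * Cmod (p z) ^1). apply derivable_pt_lim_pow.
    + eapply ctsC_u_mod; exact Hp. }
assert (C2 : ctsC (fun w => atan (Im (p w) / Re (p w))) z).
{ apply (ctsC_comp atan (fun w => Im (p w) / Re (p w))).
  - apply derivable_continuous_pt. eexists. apply derivable_pt_lim_atan.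
  - apply (ctsC_mult (fun w => Im (p w)) (fun w => / Re (p w))).
    + eapply ctsC_im; exact Hp.
    + apply (ctsC_comp (fun t => / t) (fun w => Re (p w))).
      * apply derivable_continuous_pt. exists (- / (Re (p z))^2). apply is_derive_Reals. auto_derive. lra. field. lra.
      * eapply ctsC_re; exact Hp. }
destruct (C1 (eps/2) ltac:(lra)) as [d1 [Hd1 H1]]. destruct (C2 (eps/2) ltac:(lra)) as [d2 [Hd2 H2]].
exists (Rmin d1 d2). split; [apply Rmin_pos; lra|]. intros h Hh.
assert (E : (z + h - z)%C = h) by ring.
assert (Ha : Cmod (z + h - z)%C < d1) by (rewrite E; eapply Rlt_le_trans; [exact Hh|apply Rmin_l]).
assert (Hb : Cmod (z + h - z)%C < d2) by (rewrite E; eapply Rlt_le_trans; [exact Hh|apply Rmin_r]).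
specialize (H1 _ Ha). specialize (H2 _ Hb).
eapply Rle_lt_trans; [apply Cmod_le_ReIm|].
replace (Re (Lg (p (z + h)%C) - Lg (p z))%C) with (ln (dot (p (z + h)%C) (p (z + h)%C)) / 2 - ln (dot (p z) (p z)) / 2)
  by (unfold Lg, Re; simpl; ring).
replace (Im (Lg (p (z + h)%C) - Lg (p z))%C) with (atan (Im (p (z + h)%C) / Re (p (z + h)%C)) - atan (Im (p z) / Re (p z)))
  by (unfold Lg, Im; simpl; ring).
lra.
Qed.

Theorem theorem4p8 (a1 a2 : R) (p p1 p2 : C -> C) :
  0 < a1 -> 0 < a2 -> exp 2 <= a1 - a2 ->
  (* p analytic on D with p' = p1 and p'' = p2 on D *)
  (forall z, in_disk z -> @is_derive C_AbsRing C_NormedModule p z (p1 z)) ->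
  (forall z, in_disk z -> @is_derive C_AbsRing C_NormedModule p1 z (p2 z)) ->
  p (RtoC 0) = RtoC 1 ->
  subordinate
    (fun z => (RtoC 1 + RtoC a1 * z * p1 z + RtoC a2 * (z * z) * p2 z)%C)
    (fun z => (RtoC 1 + z * cexp z)%C) ->
  subordinate p cexp.
Proof.
intros Ha1 Ha2 Hae Hp Hp1 Hp0 [w0 [Hw0h [Hw0d [Hw00 Hw0e]]]].
unfold in_disk in *.
set (u := fun z => (p z - RtoC 1)%C).
assert (Hu : forall z, Cmod z < 1 -> @is_derive C_AbsRing C_NormedModule u z (p1 z)).
{ intros z Hz. apply cderiv_of_eps. intros eps Heps.
  destruct (cderiv_eps p z (p1 z) (Hp z Hz) eps Heps) as [d [Hd Hdd]].
  exists d; split; auto. intros h Hh. unfold u.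
  replace (p (z + h)%C - RtoC 1 - (p z - RtoC 1) - h * p1 z)%C with (p (z + h)%C - p z - h * p1 z)%C by ring.
  apply Hdd, Hh. }
assert (H0 : u (RtoC 0) = RtoC 0) by (unfold u; rewrite Hp0; ring).
assert (Hq : forall w, Cmod w < 1 -> Cmod (RtoC a1 * w * p1 w + RtoC a2 * (w*w) * p2 w)%C < exp 1).
{ intros w Hw. specialize (Hw0e w Hw). specialize (Hw0d w Hw).
  replace (RtoC a1 * w * p1 w + RtoC a2 * (w*w) * p2 w)%C with (w0 w * cexp (w0 w))%C.
  2:{ apply (f_equal (fun x => x - RtoC 1)%C) in Hw0e. simpl in Hw0e.
      replace (RtoC 1 + RtoC a1 * w * p1 w + RtoC a2 * (w * w) * p2 w - RtoC 1)%C
        with (RtoC a1 * w * p1 w + RtoC a2 * (w * w) * p2 w)%C in Hw0e by ring.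
      rewrite Hw0e. ring. }
  rewrite Cmod_mult, Cmod_cexp.
  assert (HR : Re (w0 w) < 1).
  { pose proof (Cmod_Re_le (w0 w)). pose proof (Rle_abs (Re (w0 w))). lra. }
  apply exp_increasing in HR. pose proof (Cmod_ge_0 (w0 w)). pose proof (exp_pos (Re (w0 w))). nra. }
pose proof (main_bound u p1 p2 a1 a2 Ha2 Hae Hu (fun z Hz => Hp1 z Hz) H0 Hq) as Hb.
assert (Hb' : forall z, Cmod z < 1 -> (Re (p z) - 1)^2 + (Im (p z))^2 < 1/5).
{ intros z Hz. specialize (Hb z Hz). unfold u, dot, Re, Im in Hb |- *. simpl in Hb |- *. lra. }
assert (Hre : forall z, Cmod z < 1 -> 0 < Re (p z)).
{ intros z Hz. specialize (Hb' z Hz). assert (0 <= (Im (p z))^2) by apply pow2_ge_0.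
  destruct (Rle_lt_dec (Re (p z)) 0) as [Hl|Hl]; auto. exfalso.
  assert (1 <= (Re (p z) - 1)^2) by nra. lra. }
exists (fun z => Lg (p z)). split; [|split; [|split]].
- intros z Hz. unfold in_disk in Hz. exists (p1 z / p z)%C.
  apply (inv_deriv p (fun z => Lg (p z)) z (p1 z) (1 - Cmod z)).
  + lra.
  + intros h Hh. apply cexp_Lg, Hre. eapply Rle_lt_trans; [apply Cmod_triangle|]. lra.
  + apply Hp, Hz.
  + intros E. specialize (Hre z Hz). rewrite E in Hre. simpl in Hre. lra.
  + apply (Lg_p_cont p (p1 z)); [apply Hp, Hz|apply Hre, Hz].
- intros z Hz. unfold in_disk. apply Lg_small, Hb', Hz.
- simpl. rewrite Hp0. apply Lg_1.
- intros z Hz. symmetry. apply cexp_Lg, Hre, Hz.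
Qed.
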